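(* Let $M_I$ be a prefactor system and let $M$ be a limit of $M_I$, and let $M_{\bar I}$ be the compactification of $M_I$ by $M$. If $M_I$ is stable (resp. direct, resp. inverse), then $M_{\bar I}$ is also stable (resp. direct, resp. inverse).
   Context: Let $(I,\le)$ be a non-empty directed preordered set and $\mathcal F(I)$ a family of subsets of $I$, each cofinal, closed under supersets and finite intersections, containing all non-empty upward closed subsets. A system $(M_I,\triangleright)$: pairwise disjoint sets $M_i$ ($i\in I$) with relations $\triangleright\subseteq M_{i'}\times M_i$ for $i\le i'$, reflexive for $i=i'$. $a_i\approx b_j$ iff some $c\in M_{i'}$, $i'\ge i,j$, has $c\triangleright a_i$, $c\triangleright b_j$. Prefactor system: $a_{i'}\approx a_i\iff a_{i'}\triangleright a_i$ for $i\le i'$. Stable: $a_{i'}\triangleright a_i\approx b_i$ implies $a_{i'}\triangleright b_i$. $\approx$-embeddings: $\approx$-preserving $emb_{i,i'}:M_i\to M_{i'}$ with $emb_{i,i}(a)\approx a$, $emb_{i',i''}\circ emb_{i,i'}(a)\approx emb_{i,i''}(a)$, coherent if $a_{i'}\triangleright a_i\Rightarrow emb_{i',i''}(a_{i'})\triangleright a_i$. $\approx$-projections: $\approx$-preserving $proj_{i',i}:M_{i'}\to M_i$ with $proj_{i,i}(a)\approx a$, $proj_{i',i}\circ proj_{i'',i'}(a)\approx proj_{i'',i}(a)$, coherent if $a_{i''}\triangleright a_i\Rightarrow proj_{i'',i'}(a_{i''})\triangleright a_i$. Direct: coherent embeddings with $a_{i'}\triangleright a_i\iff a_{i'}\approx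 emb_{i,i'}(a_i)$. Inverse: coherent projections with $a_{i'}\triangleright a_i\iff proj_{i',i}(a_{i'})\approx a_i$. A target for $M_I$ is a set $M$ with a relation $a\triangleright a_i$ ($a\in M$, $a_i\in M_i$) such that $\{i\mid\exists a_i\in M_i,\ a\triangleright a_i\}\in\mathcal F(I)$ for all $a\in M$ and $a\triangleright a_{i'}$, $a\triangleright a_i$ imply $a_{i'}\triangleright a_i$; when $M_I$ carries embeddings/projections, the target also carries maps $Emb_i:M_i\to M$ / $Proj_i:M\to M_i$ extending the structure. The compactification $M_{\bar I}$ has index set $\bar I=I\cup\{top\}$ ($top$ greatest), $M_{top}=M$, relation on $M\times M$ equality, $emb_{i,top}=Emb_i$, $proj_{top,i}=Proj_i$. A limit of $M_I$ is a target $M$ such that for every target $N$ of $M_I$ there is a unique map $\Phi:N\to M$ with $b\triangleright a_i\Rightarrow\Phi(b)\triangleright a_i$; equivalently a target that is maximal (each $Ext(a)=\{a_i\mid a\triangleright a_i\}$ is an inclusion-maximal consistent set), extensional ($Ext(a)\sim Ext(b)$, i.e. all elements of $Ext(a)\cup Ext(b)$ pairwise $\approx$, implies $a=b$) and complete (every consistent set $\alpha$ has some $a\in M$ with $Ext(a)\sim\alpha$), where a consistent set is $\alpha\subseteq\bigcup_iM_i$ with elements pairwise related by $\triangleright$ (higher stage to lower) and $\{i\mid\alpha\cap M_i\ne\emptyset\}\in\mathcal F(I)$. *)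

(* Defs.v *)
Section Systems.

Context {I : Type} (le : I -> I -> Prop).

Definition directed_preorder : Prop :=
  (forall i, le i i) /\
  (forall i j k, le i j -> le j k -> le i k) /\
  inhabited I /\
  (forall i j, exists k, le i k /\ le j k).

Definition cofinal (A : I -> Prop) : Prop :=
  forall i, exists j, le i j /\ A j.

Definition upward_closed (A : I -> Prop) : Prop :=
  forall i j, le i j -> A i -> A j.

Definition admissible_family (F : (I -> Prop) -> Prop) : Prop :=
  (forall A, F A -> cofinal A) /\
  (forall A B : I -> Prop, F A -> (forall i, A i -> B i) -> F B) /\
  (forall A B, F A -> F B -> F (fun i => A i /\ B i)) /\
  (forall A, (exists i, A i) -> upward_closed A -> F A).

Context {M : I -> Type}.
(** [R i j b a] : b in M_j  |>  a in M_i  (only allowed when i <= j) *)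
Context (R : forall i j : I, M j -> M i -> Prop).

Definition is_system : Prop :=
  (forall i j (b : M j) (a : M i), R i j b a -> le i j) /\
  (forall i (a : M i), R i i a a).

Definition approx {i j : I} (a : M i) (b : M j) : Prop :=
  exists (k : I) (c : M k), le i k /\ le j k /\ R i k c a /\ R j k c b.

Definition prefactor : Prop :=
  forall i i', le i i' -> forall (a' : M i') (a : M i), approx a' a <-> R i i' a' a.

Definition stable : Prop :=
  forall i i' (a' : M i') (a b : M i),
    le i i' -> R i i' a' a -> approx a b -> R i i' a' b.

Definition approx_embeddings (emb : forall i i', le i i' -> M i -> M i') : Prop :=
  (forall i i' (h : le i i') (a b : M i), approx a b -> approx (emb i i' h a) (emb i i' h b)) /\
  (forall i (h : le i i) (a : M i), approx (emb i i h a) a) /\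
  (forall i i' i'' (h1 : le i i') (h2 : le i' i'') (h3 : le i i'') (a : M i),
      approx (emb i' i'' h2 (emb i i' h1 a)) (emb i i'' h3 a)).

Definition coherent_emb (emb : forall i i', le i i' -> M i -> M i') : Prop :=
  forall i i' i'' (h2 : le i' i'') (a' : M i') (a : M i),
    le i i' -> R i i' a' a -> R i i'' (emb i' i'' h2 a') a.

Definition direct (emb : forall i i', le i i' -> M i -> M i') : Prop :=
  approx_embeddings emb /\ coherent_emb emb /\
  (forall i i' (h : le i i') (a' : M i') (a : M i),
      R i i' a' a <-> approx a' (emb i i' h a)).

Definition approx_projections (proj : forall i' i, le i i' -> M i' -> M i) : Prop :=
  (forall i i' (h : le i i') (a b : M i'), approx a b -> approx (proj i' i h a) (proj i' i h b)) /\
  (forall i (h : le i i) (a : M i), approx (proj i i h a) a) /\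
  (forall i i' i'' (h1 : le i i') (h2 : le i' i'') (h3 : le i i'') (a : M i''),
      approx (proj i' i h1 (proj i'' i' h2 a)) (proj i'' i h3 a)).

Definition coherent_proj (proj : forall i' i, le i i' -> M i' -> M i) : Prop :=
  forall i i' i'' (h1 : le i i') (h2 : le i' i'') (a'' : M i'') (a : M i),
    R i i'' a'' a -> R i i' (proj i'' i' h2 a'') a.

Definition inverse (proj : forall i' i, le i i' -> M i' -> M i) : Prop :=
  approx_projections proj /\ coherent_proj proj /\
  (forall i i' (h : le i i') (a' : M i') (a : M i),
      R i i' a' a <-> approx (proj i' i h a') a).

Definition is_target (F : (I -> Prop) -> Prop) (N : Type)
    (S : forall i, N -> M i -> Prop) : Prop :=
  (forall b : N, F (fun i => exists x : M i, S i b x)) /\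
  (forall (b : N) i i' (x' : M i') (x : M i),
      le i i' -> S i' b x' -> S i b x -> R i i' x' x).

Definition is_limit (F : (I -> Prop) -> Prop) (M0 : Type)
    (T : forall i, M0 -> M i -> Prop) : Prop :=
  is_target F M0 T /\
  forall (N : Type) (S : forall i, N -> M i -> Prop), is_target F N S ->
    exists Phi : N -> M0,
      (forall b i x, S i b x -> T i (Phi b) x) /\
      (forall Psi : N -> M0, (forall b i x, S i b x -> T i (Psi b) x) ->
         forall b, Psi b = Phi b).

End Systems.

(** The compactification M_{\bar I}: index set option I, None = top. *)
Definition cle {I : Type} (le : I -> I -> Prop) (x y : option I) : Prop :=
  match x, y with
  | Some i, Some j => le i j
  | _, None => True
  | None, Some _ => False
  end.

Definition cM {I : Type} (M : I -> Type) (M0 : Type) (x : option I) : Type :=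
  match x with Some i => M i | None => M0 end.

Definition cR {I : Type} {M : I -> Type} {M0 : Type}
    (R : forall i j : I, M j -> M i -> Prop) (T : forall i, M0 -> M i -> Prop)
    (x y : option I) : cM M M0 y -> cM M M0 x -> Prop :=
  match x, y return cM M M0 y -> cM M M0 x -> Prop with
  | Some i, Some j => R i j
  | Some i, None => T i
  | None, None => fun b a => b = a
  | None, Some _ => fun _ _ => False
  end.

Definition cemb {I : Type} {le : I -> I -> Prop} {M : I -> Type} {M0 : Type}
    (emb : forall i i', le i i' -> M i -> M i') (Emb : forall i, M i -> M0)
    (x y : option I) : cle le x y -> cM M M0 x -> cM M M0 y :=
  match x, y return cle le x y -> cM M M0 x -> cM M M0 y with
  | Some i, Some j => fun h => emb i j h
  | Some i, None => fun _ => Emb i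
  | None, None => fun _ a => a
  | None, Some _ => fun h => False_rect _ h
  end.

Definition cproj {I : Type} {le : I -> I -> Prop} {M : I -> Type} {M0 : Type}
    (proj : forall i' i, le i i' -> M i' -> M i) (Proj : forall i, M0 -> M i)
    (x' x : option I) : cle le x x' -> cM M M0 x' -> cM M M0 x :=
  match x', x return cle le x x' -> cM M M0 x' -> cM M M0 x with
  | Some i', Some i => fun h => proj i' i h
  | None, Some i => fun _ => Proj i
  | None, None => fun _ a => a
  | Some _, None => fun h => False_rect _ h
  end.

Definition target_embeddings {I : Type} (le : I -> I -> Prop) {M : I -> Type} {M0 : Type}
    (R : forall i j : I, M j -> M i -> Prop) (T : forall i, M0 -> M i -> Prop)
    (emb : forall i i', le i i' -> M i -> M i') (Emb : forall i, M i -> M0) : Prop :=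
  approx_embeddings (cle le) (cR R T) (cemb emb Emb) /\
  coherent_emb (cle le) (cR R T) (cemb emb Emb).

Definition target_projections {I : Type} (le : I -> I -> Prop) {M : I -> Type} {M0 : Type}
    (R : forall i j : I, M j -> M i -> Prop) (T : forall i, M0 -> M i -> Prop)
    (proj : forall i' i, le i i' -> M i' -> M i) (Proj : forall i, M0 -> M i) : Prop :=
  approx_projections (cle le) (cR R T) (cproj proj Proj) /\
  coherent_proj (cle le) (cR R T) (cproj proj Proj).

(* Main.v *)
Require Import Defs.
From Stdlib Require Import Setoid.

Lemma capprox_some {I : Type} (le : I -> I -> Prop) (F : (I -> Prop) -> Prop)
    (M : I -> Type) (R : forall i j : I, M j -> M i -> Prop)
    (M0 : Type) (T : forall i, M0 -> M i -> Prop) :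
  directed_preorder le -> admissible_family le F -> is_target le R F M0 T ->
  forall i j (a : M i) (b : M j),
  @approx (option I) (cle le) (cM M M0) (cR R T) (Some i) (Some j) a b ->
  approx le R a b.
Proof.
  intros [Hr [Htr [_ Hd]]] [Hc _] [HtF HtR] i j a b [z [c [h1 [h2 [r1 r2]]]]].
  destruct z as [k|].
  - exists k, c. simpl in *. tauto.
  - simpl in *.
    destruct (Hd i j) as [m [him hjm]].
    destruct (Hc _ (HtF c) m) as [k [hmk [x Hx]]].
    exists k, x. repeat split; eauto.
Qed.

Lemma approx_to_c {I : Type} (le : I -> I -> Prop)
    (M : I -> Type) (R : forall i j : I, M j -> M i -> Prop)
    (M0 : Type) (T : forall i, M0 -> M i -> Prop) :
  forall i j (a : M i) (b : M j), approx le R a b ->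
  @approx (option I) (cle le) (cM M M0) (cR R T) (Some i) (Some j) a b.
Proof.
  intros i j a b [k [c H]]. exists (Some k), c. exact H.
Qed.

Lemma capprox_none {I : Type} (le : I -> I -> Prop)
    (M : I -> Type) (R : forall i j : I, M j -> M i -> Prop)
    (M0 : Type) (T : forall i, M0 -> M i -> Prop) :
  forall (p q : M0),
  @approx (option I) (cle le) (cM M M0) (cR R T) None None p q <-> p = q.
Proof.
  intros p q; split.
  - intros [z [c [h1 [h2 [r1 r2]]]]]. destruct z; simpl in *.
    + contradiction.
    + congruence.
  - intros ->. exists None, q. simpl. tauto.
Qed.

Lemma approx_trans_same {I : Type} (le : I -> I -> Prop)
    (M : I -> Type) (R : forall i j : I, M j -> M i -> Prop) :
  directed_preorder le -> prefactor le R ->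
  forall i (a b c : M i), approx le R a c -> approx le R c b -> approx le R a b.
Proof.
  intros [Hr _] Hp i a b c H1 H2.
  assert (Rca : R i i c a).
  { apply (proj1 (Hp i i (Hr i) c a)).
    destruct H1 as [k [d [x1 [x2 [x3 x4]]]]]. exists k, d. tauto. }
  assert (Rcb : R i i c b) by (apply (proj1 (Hp i i (Hr i) c b)); exact H2).
  exists i, c. repeat split; auto.
Qed.

Lemma approx_sym {I : Type} (le : I -> I -> Prop)
    (M : I -> Type) (R : forall i j : I, M j -> M i -> Prop) :
  forall i j (a : M i) (b : M j), approx le R a b -> approx le R b a.
Proof.
  intros i j a b [k [d [x1 [x2 [x3 x4]]]]]. exists k, d. tauto.
Qed.

Lemma unique_ext {I : Type} (le : I -> I -> Prop) (F : (I -> Prop) -> Prop)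
    (M : I -> Type) (R : forall i j : I, M j -> M i -> Prop)
    (M0 : Type) (T : forall i, M0 -> M i -> Prop) :
  is_limit le R F M0 T -> forall p q : M0,
  (forall i x, T i p x -> T i q x) -> p = q.
Proof.
  intros [[HtF HtR] Hu] p q Hpq.
  destruct (Hu unit (fun i _ x => T i p x)) as [Phi [HPhi Huniq]].
  { split.
    - intros _. exact (HtF p).
    - intros _ i i' x' x h H1 H2. exact (HtR p i i' x' x h H1 H2). }
  pose proof (Huniq (fun _ => p) (fun b i x H => H) tt) as E1.
  pose proof (Huniq (fun _ => q) (fun b i x H => Hpq i x H) tt) as E2.
  simpl in *. congruence.
Qed.

Lemma single {I : Type} (le : I -> I -> Prop) (F : (I -> Prop) -> Prop)
    (M : I -> Type) (R : forall i j : I, M j -> M i -> Prop)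
    (M0 : Type) (T : forall i, M0 -> M i -> Prop) :
  directed_preorder le -> admissible_family le F ->
  is_system le R -> prefactor le R -> is_limit le R F M0 T ->
  forall (a' : M0) i (b : M i),
  (forall k (h : le i k) w, T k a' w -> R i k w b) -> T i a' b.
Proof.
  intros Hdir Hadm Hsys Hp Hlim a' i b Hb.
  pose proof Hlim as [[HtF HtR] Hu].
  destruct Hdir as [Hr [Htr [_ Hd]]].
  destruct Hadm as [Hc [Hmono _]].
  destruct (Hu unit (fun j _ x => T j a' x \/ exists e : i = j, x = eq_rect i M b j e))
    as [Phi [HPhi _]].
  { split.
    - intros _. apply (Hmono _ _ (HtF a')). intros j [x Hx]. exists x. left; exact Hx.
    - intros _ j j' y x hle [Hy|[e Hy]] [Hx|[e' Hx]].
      + exact (HtR a' j j' y x hle Hy Hx).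
      + destruct e'. simpl in Hx. subst x. exact (Hb j' hle y Hy).
      + destruct e. simpl in Hy. subst y.
        destruct (Hc _ (HtF a') i) as [m [him [u Hu']]].
        apply (proj1 (Hp j i hle b x)).
        exists m, u. repeat split; eauto.
      + destruct e. destruct e'. simpl in *. subst. apply (proj2 Hsys). }
  assert (E : a' = Phi tt).
  { apply (unique_ext le F M R M0 T Hlim). intros j x Hx. apply (HPhi tt j x). left; exact Hx. }
  rewrite E. apply (HPhi tt i b). right. exists eq_refl. reflexivity.
Qed.

Theorem corollary2p12 (I : Type) (le : I -> I -> Prop) (F : (I -> Prop) -> Prop)
    (M : I -> Type) (R : forall i j : I, M j -> M i -> Prop)
    (M0 : Type) (T : forall i, M0 -> M i -> Prop) :
  directed_preorder le -> admissible_family le F ->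
  is_system le R -> prefactor le R -> is_limit le R F M0 T ->
  (stable le R -> stable (cle le) (cR R T)) /\
  (forall (emb : forall i i', le i i' -> M i -> M i') (Emb : forall i, M i -> M0),
      direct le R emb -> target_embeddings le R T emb Emb ->
      direct (cle le) (cR R T) (cemb emb Emb)) /\
  (forall (proj : forall i' i, le i i' -> M i' -> M i) (Proj : forall i, M0 -> M i),
      inverse le R proj -> target_projections le R T proj Proj ->
      inverse (cle le) (cR R T) (cproj proj Proj)).
Proof.
  intros Hdir Hadm Hsys Hp Hlim.
  pose proof Hlim as [[HtF HtR] Hu].
  pose proof Hdir as [Hr [Htr [_ Hd]]].
  pose proof Hadm as [Hc _].
  pose proof (capprox_some le F M R M0 T Hdir Hadm (proj1 Hlim)) as Cs.
  pose proof (approx_to_c le M R M0 T) as Tc.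
  pose proof (capprox_none le M R M0 T) as Cn.
  split; [|split].
  - intros Hs x x' a' a b hle Ha' Hab.
    destruct x' as [i'|], x as [i|]; simpl in *.
    + exact (Hs i i' a' a b hle Ha' (Cs _ _ _ _ Hab)).
    + contradiction.
    + apply (single le F M R M0 T Hdir Hadm Hsys Hp Hlim). intros k h w Hw.
      exact (Hs i k w a b h (HtR a' i k w a h Hw Ha') (Cs _ _ _ _ Hab)).
    + apply Cn in Hab. congruence.
  - intros emb Emb [Hae [Hce Hdr]] [Hcae Hcce].
    split; [exact Hcae|split; [exact Hcce|]].
    intros x x' h a' a. destruct x as [i|], x' as [i'|]; simpl in *.
    + rewrite (Hdr i i' h a' a). split; [apply Tc|apply Cs].
    + rewrite Cn. split.
      * intros Ha. apply (unique_ext le F M R M0 T Hlim). intros j x Hx.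
        destruct (Hd i j) as [m0 [h1 h2]].
        destruct (Hc _ (HtF a') m0) as [m [hm [v Hv]]].
        assert (hi : le i m) by eauto. assert (hj : le j m) by eauto.
        pose proof (proj1 (Hdr i m hi v a) (HtR a' i m v a hi Hv Ha)) as A1.
        pose proof ((proj1 Hcae) (Some m) None Logic.I v (emb i m hi a) (Tc _ _ _ _ A1)) as A2.
        simpl in A2. apply Cn in A2.
        pose proof ((proj2 (proj2 Hcae)) (Some i) (Some m) None hi Logic.I Logic.I a) as A3.
        simpl in A3. apply Cn in A3.
        pose proof (Hcce (Some j) (Some m) None Logic.I v x hj (HtR a' j m v x hj Hv Hx)) as A4.
        simpl in A4. congruence.
      * intros ->.
        exact (Hcce (Some i) (Some i) None Logic.I a a (Hr i) (proj2 Hsys i a)).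
    + contradiction.
    + rewrite Cn. tauto.
  - intros proj Proj [Hap [Hcp Hinv]] [Hcap Hccp].
    split; [exact Hcap|split; [exact Hccp|]].
    intros x x' h a' a. destruct x as [i|], x' as [i'|]; simpl in *.
    + rewrite (Hinv i i' h a' a). split; [apply Tc|apply Cs].
    + split.
      * intros Ha. apply Tc.
        pose proof (Hccp (Some i) (Some i) None (Hr i) Logic.I a' a Ha) as A. simpl in A.
        apply (proj2 (Hp i i (Hr i) _ _)). exact A.
      * intros A4. apply Cs in A4.
        apply (single le F M R M0 T Hdir Hadm Hsys Hp Hlim). intros k hk w Hw.
        apply (proj2 (Hinv i k hk w a)).
        pose proof (Hccp (Some k) (Some k) None (Hr k) Logic.I a' w Hw) as A1. simpl in A1.
        apply (proj2 (Hp k k (Hr k) _ _)) in A1.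
        pose proof (proj1 Hap i k hk _ _ A1) as A2.
        pose proof ((proj2 (proj2 Hcap)) (Some i) (Some k) None hk Logic.I Logic.I a') as A3.
        simpl in A3. apply Cs in A3.
        eapply (approx_trans_same le M R Hdir Hp); [apply approx_sym; exact A2|].
        eapply (approx_trans_same le M R Hdir Hp); [exact A3|exact A4].
    + contradiction.
    + rewrite Cn. tauto.
Qed.
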